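(* Suppose Assumptions A(b)–A(c) hold (and the ADMM iterates are well defined). Let $\{(x^r,y^r)\}$ be generated by the ADMM algorithm. Then there exists a constant $\sigma>0$, independent of $y^r$, such that $$\|\tilde\nabla_x L(x^r;y^r)\|\le\sigma\|x^{r+1}-x^r\|\qquad\text{for all } r\ge1.$$
   Context: Let $x=(x_1^T,\dots,x_K^T)^T\in\mathbb{R}^n$ be partitioned into blocks, $E=(E_1,\dots,E_K)\in\mathbb{R}^{m\times n}$ partitioned accordingly, $q\in\mathbb{R}^m$, $X=\prod_kX_k$. Objective $f(x)=\sum_kf_k(x_k)$ with (A(b)) $f_k(x_k)=g_k(A_kx_k)+h_k(x_k)$, $g_k,h_k$ convex and continuous on their domains, $A_k$ given matrices; (A(c)) each $g_k$ is strictly convex and continuously differentiable on the interior of its domain and there is $L>0$ with $\|A_k^T\nabla g_k(A_kx_k)-A_k^T\nabla g_k(A_kx_k')\|\le L\|x_k-x_k'\|$ for all $x_k,x_k'\in X_k$. The constraint $x_k\in X_k$ is absorbed into $h_k$ via its indicator function; $h(x)=\sum_kh_k(x_k)$, $g(Ax)=\sum_kg_k(A_kx_k)$. For $\rho>0$, $L(x;y)=f(x)+\langle y,q-Ex\rangle+\frac{\rho}{2}\|q-Ex\|^2$. $\mathrm{prox}_h(v)=\arg\min_u h(u)+\frac12\|v-u\|^2$; the proximal gradient is $\tilde\nabla_xL(x;y)=x-\mathrm{prox}_h\big(x-A^T\nabla g(Ax)+E^Ty-\rho E^T(Ex-q)\big)$, where $A^T\nabla g(Ax)$ has blocks $A_k^T\nabla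 g_k(A_kx_k)$. ADMM with dual stepsize $\alpha>0$: from $(x^0,y^0)$, for $r=0,1,\dots$, compute for $k=1,\dots,K$ in order $x_k^{r+1}=\arg\min_{x_k\in X_k}L(x_1^{r+1},\dots,x_{k-1}^{r+1},x_k,x_{k+1}^r,\dots,x_K^r;y^r)$, then $y^{r+1}=y^r+\alpha(q-Ex^{r+1})$. *)

(* Defs.v *)
From HB Require Import structures.
From mathcomp Require Import all_boot all_order all_algebra.
Unset Printing Implicit Defensive.
Import Order.TTheory GRing.Theory Num.Theory.
Local Open Scope ring_scope.

Definition dotv {R : numDomainType} {n : nat} (u v : 'cV[R]_n) : R :=
  \sum_(i < n) u i 0 * v i 0.
Definition normv {R : rcfType} {n : nat} (u : 'cV[R]_n) : R :=
  Num.sqrt (dotv u u).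

(* An extended-valued function is represented by a real-valued function f
   together with its (effective) domain D; f = +oo outside D. *)
Definition convex_set {R : rcfType} {n : nat} (D : 'cV[R]_n -> Prop) :=
  forall u v (t : R), D u -> D v -> 0 <= t <= 1 -> D (t *: u + (1 - t) *: v).

Definition convex_fun_on {R : rcfType} {n : nat} (D : 'cV[R]_n -> Prop) (f : 'cV[R]_n -> R) :=
  convex_set D /\
  forall u v (t : R), D u -> D v -> 0 <= t <= 1 ->
    f (t *: u + (1 - t) *: v) <= t * f u + (1 - t) * f v.

Definition strictly_convex_on {R : rcfType} {n : nat} (D : 'cV[R]_n -> Prop) (f : 'cV[R]_n -> R) :=
  convex_set D /\
  forall u v (t : R), D u -> D v -> u <> v -> 0 < t < 1 ->
    f (t *: u + (1 - t) *: v) < t * f u + (1 - t) * f v.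

Definition interior {R : rcfType} {n : nat} (D : 'cV[R]_n -> Prop) (z : 'cV[R]_n) : Prop :=
  exists2 delta : R, 0 < delta & forall u, normv (u - z) < delta -> D u.

Definition continuous_on {R : rcfType} {n : nat} (D : 'cV[R]_n -> Prop) (f : 'cV[R]_n -> R) :=
  forall z, D z -> forall e : R, 0 < e ->
    exists2 delta : R, 0 < delta &
      forall u, D u -> normv (u - z) < delta -> `|f u - f z| < e.

Definition vcontinuous_on {R : rcfType} {n p : nat} (D : 'cV[R]_n -> Prop)
    (F : 'cV[R]_n -> 'cV[R]_p) :=
  forall z, D z -> forall e : R, 0 < e ->
    exists2 delta : R, 0 < delta &
      forall u, D u -> normv (u - z) < delta -> normv (F u - F z) < e.

Definition is_gradient_at {R : rcfType} {n : nat} (D : 'cV[R]_n -> Prop)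
    (f : 'cV[R]_n -> R) (G z : 'cV[R]_n) :=
  forall e : R, 0 < e ->
    exists2 delta : R, 0 < delta &
      forall u, D u -> normv (u - z) < delta ->
        `|f u - f z - dotv G (u - z)| <= e * normv (u - z).

Notation bvec R d := (forall k, 'cV[R]_(d k)) (only parsing).

Definition bsub {R : rcfType} {K : nat} {d : 'I_K -> nat} (x z : bvec R d) : bvec R d :=
  fun k => x k - z k.

Definition bnorm {R : rcfType} {K : nat} {d : 'I_K -> nat} (x : bvec R d) : R :=
  Num.sqrt (\sum_(k < K) dotv (x k) (x k)).

Definition Emul {R : rcfType} {K m : nat} {d : 'I_K -> nat}
    (E : forall k : 'I_K, 'M[R]_(m, d k)) (x : bvec R d) : 'cV[R]_m :=
  \sum_(k < K) E k *m x k.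

Section AL.
Variables (R : rcfType) (K m : nat) (d pd : 'I_K -> nat).
Variables (E : forall k : 'I_K, 'M[R]_(m, d k)) (A : forall k : 'I_K, 'M[R]_(pd k, d k)).
Variables (q : 'cV[R]_m).
Variables (g : forall k : 'I_K, 'cV[R]_(pd k) -> R) (domg : forall k : 'I_K, 'cV[R]_(pd k) -> Prop).
Variables (h : forall k : 'I_K, 'cV[R]_(d k) -> R) (domh : forall k : 'I_K, 'cV[R]_(d k) -> Prop).
Variable (rho : R).

(* x lies in the effective domain of L(.;y) (L is +oo elsewhere) *)
Definition ALdom (x : bvec R d) : Prop :=
  forall k : 'I_K, domh k (x k) /\ domg k (A k *m x k).

Definition ALval (x : bvec R d) (y : 'cV[R]_m) : R :=
  \sum_(k < K) (g k (A k *m x k) + h k (x k))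
  + dotv y (q - Emul E x) + rho / 2 * (normv (q - Emul E x)) ^+ 2.

Definition admm_mix (xnew xold : bvec R d) (k : 'I_K) (z : 'cV[R]_(d k)) : bvec R d :=
  @dfwith _ (fun j : 'I_K => 'cV[R]_(d j))
    (fun j => if (j < k)%N then xnew j else xold j) k z.

Definition admm_block_min (X : forall k : 'I_K, 'cV[R]_(d k) -> Prop)
    (xnew xold : bvec R d) (y : 'cV[R]_m) (k : 'I_K) : Prop :=
  [/\ X k (xnew k),
      ALdom (admm_mix xnew xold k (xnew k)) &
      forall z, X k z -> ALdom (admm_mix xnew xold k z) ->
        ALval (admm_mix xnew xold k (xnew k)) y <= ALval (admm_mix xnew xold k z) y].

Definition is_prox (v p : bvec R d) : Prop :=
  (forall k : 'I_K, domh k (p k)) /\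
  forall u : bvec R d, (forall k : 'I_K, domh k (u k)) ->
    \sum_(k < K) h k (p k) + 1 / 2 * (bnorm (bsub v p)) ^+ 2
      <= \sum_(k < K) h k (u k) + 1 / 2 * (bnorm (bsub v u)) ^+ 2.

Definition pg_arg (gradg : forall k : 'I_K, 'cV[R]_(pd k) -> 'cV[R]_(pd k))
    (x : bvec R d) (y : 'cV[R]_m) : bvec R d :=
  fun k => x k - (A k)^T *m gradg k (A k *m x k) + (E k)^T *m y
           - rho *: ((E k)^T *m (Emul E x - q)).

(* the proximal gradient  tilde-nabla_x L(x;y) = x - prox_h(pg_arg x y) is
   expressed as  bsub x p  for p with  is_prox (pg_arg gradg x y) p. *)
End AL.
Arguments ALdom {R K d pd} A domg domh x.
Arguments ALval {R K m d pd} E A q g h rho x y.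
Arguments admm_mix {R K d} xnew xold k z _.
Arguments admm_block_min {R K m d pd} E A q g domg h domh rho X xnew xold y k.
Arguments is_prox {R K d} h domh v p.
Arguments pg_arg {R K m d pd} E A q rho gradg x y _.

(* Main.v *)
Require Import Defs.
From HB Require Import structures.
From mathcomp Require Import all_boot all_order all_algebra.
From mathcomp Require Import ring lra.
Import Order.TTheory GRing.Theory Num.Theory.
Local Open Scope ring_scope.

Set Implicit Arguments.
Unset Strict Implicit.

Section Basics.
Variable R : rcfType.

Lemma dotvE n (u v : 'cV[R]_n) : dotv u v = (u^T *m v) 0 0.
Proof. by rewrite /dotv mxE; apply: eq_bigr => i _; rewrite mxE. Qed.

Lemma dotvC n (u v : 'cV[R]_n) : dotv u v = dotv v u.
Proof. by rewrite /dotv; apply: eq_bigr => i _; rewrite mulrC. Qed.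

Lemma dotvDl n (u v w : 'cV[R]_n) : dotv (u + v) w = dotv u w + dotv v w.
Proof. by rewrite /dotv -big_split; apply: eq_bigr => i _; rewrite !mxE mulrDl. Qed.

Lemma dotvDr n (u v w : 'cV[R]_n) : dotv w (u + v) = dotv w u + dotv w v.
Proof. by rewrite dotvC dotvDl !(dotvC w). Qed.

Lemma dotvZl n a (u w : 'cV[R]_n) : dotv (a *: u) w = a * dotv u w.
Proof. by rewrite /dotv mulr_sumr; apply: eq_bigr => i _; rewrite !mxE mulrA. Qed.

Lemma dotvZr n a (u w : 'cV[R]_n) : dotv w (a *: u) = a * dotv w u.
Proof. by rewrite dotvC dotvZl dotvC. Qed.

Lemma dotvNl n (u w : 'cV[R]_n) : dotv (- u) w = - dotv u w.
Proof. by rewrite -scaleN1r dotvZl mulN1r. Qed.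

Lemma dotvNr n (u w : 'cV[R]_n) : dotv w (- u) = - dotv w u.
Proof. by rewrite dotvC dotvNl dotvC. Qed.

Lemma dotvBl n (u v w : 'cV[R]_n) : dotv (u - v) w = dotv u w - dotv v w.
Proof. by rewrite dotvDl dotvNl. Qed.

Lemma dotvBr n (u v w : 'cV[R]_n) : dotv w (u - v) = dotv w u - dotv w v.
Proof. by rewrite dotvDr dotvNr. Qed.

Lemma dotv_mul n p (M : 'M[R]_(n, p)) u v : dotv u (M *m v) = dotv (M^T *m u) v.
Proof. by rewrite !dotvE trmx_mul trmxK mulmxA. Qed.

Lemma dotvv_ge0 n (u : 'cV[R]_n) : 0 <= dotv u u.
Proof. by apply: sumr_ge0 => i _; rewrite -expr2 sqr_ge0. Qed.

Lemma normv_sqr n (u : 'cV[R]_n) : normv u ^+ 2 = dotv u u.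
Proof. by rewrite /normv sqr_sqrtr // dotvv_ge0. Qed.

Lemma normv_ge0 n (u : 'cV[R]_n) : 0 <= normv u.
Proof. exact: sqrtr_ge0. Qed.

Lemma normvZ n a (u : 'cV[R]_n) : normv (a *: u) = `|a| * normv u.
Proof.
rewrite /normv dotvZl dotvZr mulrA -expr2 sqrtrM ?sqr_ge0 //.
by rewrite sqrtr_sqr.
Qed.

Lemma normv0 n : normv (0 : 'cV[R]_n) = 0.
Proof. by rewrite -(scale0r 0) normvZ normr0 mul0r. Qed.

Lemma coord_le_normv n (u : 'cV[R]_n) i : `|u i 0| <= normv u.
Proof.
rewrite -(sqrtr_sqr (u i 0)) /normv ler_sqrt ?dotvv_ge0 //.
rewrite /dotv (bigD1 i) //= -expr2 lerDl.
by apply: sumr_ge0 => j _; rewrite -expr2 sqr_ge0.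
Qed.

Lemma sqrt_sum_le (I : finType) (P : pred I) (a : I -> R) :
  Num.sqrt (\sum_(i | P i) a i ^+ 2) <= \sum_(i | P i) `|a i|.
Proof.
have s0 : 0 <= \sum_(i | P i) `|a i| by apply: sumr_ge0.
apply: (@le_trans _ _ (Num.sqrt ((\sum_(i | P i) `|a i|) ^+ 2))); last first.
  by rewrite sqrtr_sqr ger0_norm.
rewrite ler_sqrt ?sqr_ge0 //.
rewrite expr2 mulr_suml; apply: ler_sum => i Pi.
rewrite mulr_sumr (bigD1 i) //= -normrM -expr2 ger0_norm ?sqr_ge0 //.
by rewrite lerDl; apply: sumr_ge0 => j _; rewrite -normrM.
Qed.

Definition n1 n (u : 'cV[R]_n) := \sum_(i < n) `|u i 0|.

Lemma n1_ge0 n (u : 'cV[R]_n) : 0 <= n1 u.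
Proof. exact: sumr_ge0. Qed.

Lemma normv_le_n1 n (u : 'cV[R]_n) : normv u <= n1 u.
Proof.
rewrite /normv /dotv (eq_bigr (fun i => (u i 0) ^+ 2)); first exact: sqrt_sum_le.
by move=> i _; rewrite expr2.
Qed.

Lemma n1_le_normv n (u : 'cV[R]_n) : n1 u <= n%:R * normv u.
Proof.
have -> : n%:R * normv u = \sum_(i < n) normv u by rewrite sumr_const card_ord mulr_natl.
rewrite /n1; apply: ler_sum => i _.
exact: coord_le_normv.
Qed.

Lemma n1D n (u v : 'cV[R]_n) : n1 (u + v) <= n1 u + n1 v.
Proof. by rewrite /n1 -big_split; apply: ler_sum => i _; rewrite mxE ler_normD. Qed.

Lemma n1N n (u : 'cV[R]_n) : n1 (- u) = n1 u.
Proof. by rewrite /n1; apply: eq_bigr => i _; rewrite mxE normrN. Qed.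

Lemma n1Z n a (u : 'cV[R]_n) : n1 (a *: u) = `|a| * n1 u.
Proof. by rewrite /n1 mulr_sumr; apply: eq_bigr => i _; rewrite mxE normrM. Qed.

Lemma n1_sum n (I : finType) (F : I -> 'cV[R]_n) : n1 (\sum_i F i) <= \sum_i n1 (F i).
Proof.
elim/big_rec2: _ => [|i y1 y2 _ Hy]; first by rewrite /n1 big1 // => i _; rewrite mxE normr0.
by apply: (le_trans (n1D _ _)); rewrite lerD2l.
Qed.

Definition msum n p (M : 'M[R]_(n, p)) := \sum_(i < n) \sum_(j < p) `|M i j|.

Lemma msum_ge0 n p (M : 'M[R]_(n, p)) : 0 <= msum M.
Proof. by apply: sumr_ge0 => i _; apply: sumr_ge0. Qed.

Lemma n1_mul n p (M : 'M[R]_(n, p)) u : n1 (M *m u) <= msum M * n1 u.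
Proof.
rewrite /n1 /msum mulr_suml; apply: ler_sum => i _; rewrite mxE.
apply: (le_trans (ler_norm_sum _ _ _)); rewrite mulr_suml; apply: ler_sum => j _.
rewrite normrM ler_wpM2l //.
by rewrite (bigD1 j) //= lerDl; apply: sumr_ge0.
Qed.

Lemma dotv_le_n1 n (c u : 'cV[R]_n) : dotv c u <= n1 c * normv u.
Proof.
rewrite /dotv /n1 mulr_suml; apply: ler_sum => i _.
apply: (le_trans (ler_norm _)); rewrite normrM ler_wpM2l //.
exact: coord_le_normv.
Qed.

End Basics.

Section VI.
Variable R : rcfType.

Lemma vi n (D : 'cV[R]_n -> Prop) (hf phi : 'cV[R]_n -> R) zs z (s : R) :
  convex_fun_on D hf -> D zs -> D z ->
  (forall u, D u -> hf zs + phi zs <= hf u + phi u) ->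
  (forall e, 0 < e -> exists2 t0, 0 < t0 & forall t, 0 < t -> t <= t0 ->
      phi (t *: z + (1-t) *: zs) - phi zs - t * s <= t * e) ->
  0 <= hf z - hf zs + s.
Proof.
move=> [cD chf] Dzs Dz Hmin Hd.
case: (leP 0 (hf z - hf zs + s)) => // HS.
have He : 0 < - (hf z - hf zs + s) / 2 by rewrite divr_gt0 // oppr_gt0.
have [t0 t0p Ht] := Hd _ He.
set t := Num.min t0 1.
have tp : 0 < t by rewrite lt_min t0p ltr01.
have tt0 : t <= t0 by rewrite ge_min lexx.
have t1 : t <= 1 by rewrite ge_min lexx orbT.
have H1 := Ht t tp tt0.
have tI : 0 <= t <= 1 by rewrite t1 ltW.
have H2 := chf z zs t Dz Dzs tI.
have H3 := Hmin _ (cD z zs t Dz Dzs tI).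
set u := t *: z + (1 - t) *: zs in H1 H2 H3.
set S := hf z - hf zs + s in HS He H1.
have : 0 <= t * (S / 2).
  rewrite /S in H1 *; move: H1 H2 H3; set a := phi u; set b := phi zs; set c := hf u.
  set X1 := hf z; set X2 := hf zs.
  move=> H1 H2 H3.
  have E1 : t * (- (X1 - X2 + s) / 2) = - (t * X1 - t * X2 + t * s) / 2 by ring.
  have E2 : t * ((X1 - X2 + s) / 2) = (t * X1 - t * X2 + t * s) / 2 by ring.
  have E3 : (1 - t) * X2 = X2 - t * X2 by ring.
  rewrite E1 in H1; rewrite E3 in H2; rewrite E2.
  lra.
by rewrite pmulr_rge0 // pmulr_lge0 // ?invr_gt0 // ?ltr0n // leNgt HS.
Qed.

End VI.

Section Prox.
Variable R : rcfType.

Lemma quad_small (Q e : R) : 0 <= Q -> 0 < e ->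
  exists2 t0, 0 < t0 & forall t, 0 < t -> t <= t0 -> t * t * Q <= t * e.
Proof.
move=> Q0 e0; exists (e / (Q + 1)); first by rewrite divr_gt0 // ltr_wpDl.
move=> t tp tle; rewrite -mulrA ler_pM2l //.
have Q1 : 0 < Q + 1 by rewrite ltr_wpDl.
apply: (le_trans (ler_wpM2r Q0 tle)).
rewrite mulrAC ler_pdivrMr // ler_pM2l //; lra.
Qed.

Lemma dotv_sqB n (a b : 'cV[R]_n) t :
  dotv (a - t *: b) (a - t *: b) = dotv a a - 2 * t * dotv a b + t * t * dotv b b.
Proof.
rewrite !(dotvBl, dotvBr, dotvZl, dotvZr) (dotvC b a); ring.
Qed.

Lemma sum_dfwith (K : nat) (d : 'I_K -> nat) (F : forall j, 'cV[R]_(d j) -> R)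
   (p : forall j, 'cV[R]_(d j)) k (w : 'cV[R]_(d k)) :
  \sum_j F j (dfwith p w j) = F k w + \sum_(j | j != k) F j (p j).
Proof.
rewrite (bigD1 k) //= dfwith_in; congr (_ + _).
by apply: eq_bigr => j jk; rewrite dfwith_out // eq_sym.
Qed.

Lemma sum_split (K : nat) (d : 'I_K -> nat) (F : forall j, 'cV[R]_(d j) -> R)
   (p : forall j, 'cV[R]_(d j)) k :
  \sum_j F j (p j) = F k (p k) + \sum_(j | j != k) F j (p j).
Proof. by rewrite (bigD1 k). Qed.

Lemma bnorm_sqr (K : nat) (d : 'I_K -> nat) (x : forall j, 'cV[R]_(d j)) :
  bnorm x ^+ 2 = \sum_j dotv (x j) (x j).
Proof. by rewrite /bnorm sqr_sqrtr //; apply: sumr_ge0 => j _; apply: dotvv_ge0. Qed.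

Lemma prox_vi (K : nat) (d : 'I_K -> nat) h domh (v p : forall j, 'cV[R]_(d j)) k z :
  (forall k, convex_fun_on (domh k) (h k)) -> is_prox h domh v p -> domh k z ->
  0 <= h k z - h k (p k) + dotv (p k - v k) (z - p k).
Proof.
move=> hc [Pd Pmin] Dz.
pose C := \sum_(j | j != k) h j (p j) + 1 / 2 * \sum_(j | j != k) dotv (v j - p j) (v j - p j).
pose phi := fun w : 'cV[R]_(d k) => C + 1 / 2 * dotv (v k - w) (v k - w).
apply: (@vi _ _ (domh k) (h k) phi) => //.
- move=> u Du.
  have H' : (forall k0, domh k0 (dfwith p u k0)).
    by move=> j; case: dfwithP => // j' _; apply: Pd.
  have := Pmin (dfwith p u) H'.
  rewrite !bnorm_sqr /bsub.
  rewrite (sum_dfwith (fun j w => h j w)) (sum_dfwith (fun j w => dotv (v j - w) (v j - w))).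
  rewrite (@sum_split _ _ (fun j w => h j w) p k).
  rewrite (@sum_split _ _ (fun j w => dotv (v j - w) (v j - w)) p k).
  rewrite /phi /C.
  set a1 := \sum_(j | j != k) h j (p j).
  set a2 := \sum_(j | j != k) dotv (v j - p j) (v j - p j).
  move=> HH. lra.
- move=> e e0.
  have e2 : 0 < 2 * e by rewrite mulr_gt0.
  have [t0 t0p Ht] := quad_small (dotvv_ge0 (z - p k)) e2.
  exists t0 => // t tp tt0.
  rewrite /phi.
  have -> : v k - (t *: z + (1 - t) *: p k) = (v k - p k) - t *: (z - p k).
    by apply/matrixP => i j; rewrite !mxE; ring.
  rewrite /phi dotv_sqB.
  have -> : p k - v k = - (v k - p k) by rewrite opprB.
  rewrite dotvNl.
  have := Ht t tp tt0.
  set Q := dotv (z - p k) (z - p k); set P := dotv (v k - p k) (z - p k).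
  set W := dotv (v k - p k) (v k - p k).
  move=> HH.
  have -> : C + 1 / 2 * (W - 2 * t * P + t * t * Q) - (C + 1 / 2 * W) - t * - P
     = t * t * Q / 2 :> R.
    by rewrite /W /P /Q; field.
  move: HH; set T := t * t * Q; move=> HH.
  have E1 : t * (2 * e) = 2 * (t * e) :> R by ring.
  rewrite E1 in HH.
  move: HH; set U := t * e; move=> HH. lra.
Qed.
End Prox.

Unset Implicit Arguments.
Set Strict Implicit.

Lemma sum_dfwithV (V : zmodType) (K : nat) (T : 'I_K -> Type) (F : forall j, T j -> V)
   (p : forall j, T j) k (w : T k) :
  \sum_j F j (dfwith p w j) = F k w + \sum_(j | j != k) F j (p j).
Proof.
rewrite (bigD1 k) //= dfwith_in; congr (_ + _).
by apply: eq_bigr => j jk; rewrite dfwith_out // eq_sym.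
Qed.

Lemma interior_sub (R : rcfType) n (D : 'cV[R]_n -> Prop) z : interior D z -> D z.
Proof. by case=> delta dp H; apply: H; rewrite subrr normv0. Qed.

Section ADMM.
Variables (R : rcfType) (K m : nat) (d pd : 'I_K -> nat).
Variables (E : forall k : 'I_K, 'M[R]_(m, d k)) (A : forall k : 'I_K, 'M[R]_(pd k, d k)).
Variables (q : 'cV[R]_m).
Variables (g : forall k : 'I_K, 'cV[R]_(pd k) -> R) (domg : forall k : 'I_K, 'cV[R]_(pd k) -> Prop).
Variables (gradg : forall k : 'I_K, 'cV[R]_(pd k) -> 'cV[R]_(pd k)).
Variables (h : forall k : 'I_K, 'cV[R]_(d k) -> R) (domh : forall k : 'I_K, 'cV[R]_(d k) -> Prop).
Variables (X : forall k : 'I_K, 'cV[R]_(d k) -> Prop) (rho : R).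
Hypothesis rhop : 0 < rho.
Hypothesis hconv : forall k : 'I_K, convex_fun_on (domh k) (h k).
Hypothesis HX : forall (k : 'I_K) u, domh k u -> X k u.
Hypothesis Hint : forall (k : 'I_K) u, X k u -> interior (domg k) (A k *m u).
Hypothesis Hgrad : forall (k : 'I_K) z, interior (domg k) z -> is_gradient_at (domg k) (g k) (gradg k z) z.

Lemma admm_vi (xn xo : forall k, 'cV[R]_(d k)) y k z :
  admm_block_min E A q g domg h domh rho X xn xo y k -> domh k z ->
  0 <= h k z - h k (xn k) +
     dotv ((A k)^T *m gradg k (A k *m xn k) - (E k)^T *m y
           + rho *: ((E k)^T *m (Emul E (admm_mix xn xo k (xn k)) - q))) (z - xn k).
Proof.
case=> Xx ALd Hmin Dz.
have mixk : forall w, admm_mix xn xo k w k = w by move=> w; rewrite /admm_mix dfwith_in.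
have Dx : domh k (xn k) by have := (ALd k).1; rewrite mixk.
pose phi w := ALval E A q g h rho (admm_mix xn xo k w) y - h k w.
apply: (@vi _ _ (domh k) (h k) phi) => //.
- move=> u Du.
  have ALdu : ALdom A domg domh (admm_mix xn xo k u).
    move=> j; case: (eqVneq k j) => [<-|kj].
      by rewrite mixk; split => //; exact: interior_sub (Hint _ _ (HX _ _ Du)).
    by have := ALd j; rewrite /admm_mix !dfwith_out.
  have := Hmin u (HX _ _ Du) ALdu; rewrite /phi.
  set a := ALval _ _ _ _ _ _ _ _; set b := ALval _ _ _ _ _ _ _ _.
  move=> H; lra.
set xs := xn k.
pose f := fun j : 'I_K => if (j < k)%N then xn j else xo j.
pose Cst := \sum_(j | j != k) (g j (A j *m f j) + h j (f j)).
pose c0 := q - \sum_(j | j != k) E j *m f j.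
have EmulE : forall w, Emul E (admm_mix xn xo k w) = E k *m w + \sum_(j | j != k) E j *m f j.
  move=> w; rewrite /Emul /admm_mix.
  rewrite (@sum_dfwithV _ K (fun j => 'cV[R]_(d j)) (fun j (v : 'cV[R]_(d j)) => E j *m v) f k w).
  by [].
have phiE : forall w, phi w = g k (A k *m w) + Cst + dotv y (c0 - E k *m w)
           + rho / 2 * dotv (c0 - E k *m w) (c0 - E k *m w).
  move=> w; rewrite /phi /ALval EmulE normv_sqr.
  have -> : q - (E k *m w + \sum_(j | j != k) E j *m f j) = c0 - E k *m w.
    by rewrite /c0 opprD addrA addrAC.
  rewrite /admm_mix (@sum_dfwithV _ K (fun j => 'cV[R]_(d j)) (fun j (v : 'cV[R]_(d j)) => g j (A j *m v) + h j v) f k w).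
  rewrite -/Cst. ring.
set AD := A k *m (z - xs).
set dd := E k *m (z - xs).
set e0 := c0 - E k *m xs.
set gr := gradg k (A k *m xs).
have sE : dotv ((A k)^T *m gr - (E k)^T *m y
           + rho *: ((E k)^T *m (Emul E (admm_mix xn xo k xs) - q))) (z - xs)
          = dotv gr AD - dotv y dd - rho * dotv e0 dd.
  rewrite EmulE.
  have -> : E k *m xs + \sum_(j | j != k) E j *m f j - q = - e0.
    by rewrite /e0 /c0; apply/matrixP => i j; rewrite !mxE; ring.
  rewrite dotvDl dotvBl dotvZl -!dotv_mul dotvNl.
  rewrite /AD /dd; ring.
rewrite sE => e e0p.
set N := normv AD.
have N0 : 0 <= N by apply: normv_ge0.
have N1 : 0 < N + 1 by rewrite ltr_wpDl.
have e1p : 0 < e / (2 * (N + 1)) by rewrite divr_gt0 // mulr_gt0.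
have [delta dp Hd] := Hgrad k (A k *m xs) (Hint _ _ Xx) _ e1p.
have Q0 : 0 <= rho * dotv dd dd by apply: mulr_ge0; [exact: ltW | exact: dotvv_ge0].
have [t2 t2p Ht2] := quad_small Q0 e0p.
exists (Num.min (delta / (N + 1)) (Num.min t2 1)).
  by rewrite !lt_min t2p ltr01 divr_gt0.
move=> t tp; rewrite !le_min => /andP[tdel /andP[tt2 t1]].
set ut := t *: z + (1 - t) *: xs.
have tI : 0 <= t <= 1 by rewrite t1 ltW.
have Dut : domh k ut := (hconv k).1 z xs t Dz Dx tI.
have utE : ut - xs = t *: (z - xs) by apply/matrixP => i j; rewrite !mxE; ring.
have AutE : A k *m ut - A k *m xs = t *: AD by rewrite -mulmxBr utE -scalemxAr.
have EutE : c0 - E k *m ut = e0 - t *: dd.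
  by rewrite /e0 /dd scalemxAr -utE mulmxBr opprB addrA subrK.
have nA : normv (A k *m ut - A k *m xs) = t * N by rewrite AutE normvZ ger0_norm // ltW.
have tN : t * N < delta.
  have : t * (N + 1) <= delta by rewrite -ler_pdivlMr.
  apply: lt_le_trans; rewrite ltr_pM2l //; lra.
have Hg := Hd (A k *m ut) (interior_sub _ _ _ _ (Hint _ _ (HX _ _ Dut))) (eq_ind_r (fun a => a < delta) tN nA).
rewrite nA AutE dotvZr in Hg.
have b1 : e / (2 * (N + 1)) * (t * N) <= t * e / 2.
  have -> : e / (2 * (N + 1)) * (t * N) = t * e / 2 * (N / (N + 1)) :> R.
    by field; rewrite gt_eqF.
  apply: ler_piMr; first by rewrite divr_ge0 // mulr_ge0 // ltW.
  by rewrite ler_pdivrMr // mul1r lerDl.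
have b2 : rho / 2 * (t * t * dotv dd dd) <= t * e / 2.
  have := Ht2 t tp tt2; move: (dotv dd dd) => D HH.
  have -> : rho / 2 * (t * t * D) = (t * t * (rho * D)) / 2 :> R by field.
  by rewrite ler_pM2r // invr_gt0 ltr0n.
have -> : phi ut - phi xs - t * (dotv gr AD - dotv y dd - rho * dotv e0 dd) =
   (g k (A k *m ut) - g k (A k *m xs) - t * dotv gr AD) + rho / 2 * (t * t * dotv dd dd).
  rewrite !phiE EutE -/e0 dotv_sqB !(dotvBr, dotvZr).
  by field.
have := ler_norm (g k (A k *m ut) - g k (A k *m xs) - t * dotv gr AD).
move: Hg b1 b2; set G := g k _ - _ - _; set U := _ * (t * N); set V := rho / 2 * _.
move=> *; lra.
Qed.
End ADMM.

Lemma sq_le (R : rcfType) (a b : R) : 0 <= a -> 0 <= b -> a * a <= b * a -> a <= b.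
Proof.
move=> a0 b0 H; case: (eqVneq a 0) => [->//|an0].
have ap : 0 < a by rewrite lt_def an0.
by rewrite -(ler_pM2r ap).
Qed.

Lemma block_le_bnorm (R : rcfType) K (d : 'I_K -> nat) (x : forall j, 'cV[R]_(d j)) j :
  normv (x j) <= bnorm x.
Proof.
rewrite /normv /bnorm ler_sqrt; last by apply: sumr_ge0 => i _; apply: dotvv_ge0.
rewrite (bigD1 j) //= lerDl; apply: sumr_ge0 => i _; apply: dotvv_ge0.
Qed.

Lemma bnorm_le_sum (R : rcfType) K (d : 'I_K -> nat) (x : forall j, 'cV[R]_(d j)) :
  bnorm x <= \sum_j normv (x j).
Proof.
have H := @sqrt_sum_le R _ predT (fun j => normv (x j)).
have E1 : bnorm x = Num.sqrt (\sum_(j | predT j) normv (x j) ^+ 2).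
  by rewrite /bnorm; congr Num.sqrt; apply: eq_bigr => j _; rewrite normv_sqr.
rewrite E1; apply: (le_trans H); apply: ler_sum => j _; rewrite ger0_norm //; apply: normv_ge0.
Qed.

Lemma n10 (R : rcfType) n : n1 (0 : 'cV[R]_n) = 0.
Proof. by rewrite /n1 big1 // => i _; rewrite mxE normr0. Qed.

Lemma EmulB (R : rcfType) K m (d : 'I_K -> nat) (E : forall k : 'I_K, 'M[R]_(m, d k)) a b :
  Emul E a - Emul E b = \sum_j E j *m (a j - b j).
Proof. by rewrite /Emul -sumrB; apply: eq_bigr => j _; rewrite mulmxBr. Qed.

Theorem lemma2p5 (R : rcfType) (K m : nat) (d pd : 'I_K -> nat)
  (E : forall k : 'I_K, 'M[R]_(m, d k)) (A : forall k : 'I_K, 'M[R]_(pd k, d k))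
  (q : 'cV[R]_m)
  (g : forall k : 'I_K, 'cV[R]_(pd k) -> R) (domg : forall k : 'I_K, 'cV[R]_(pd k) -> Prop)
  (gradg : forall k : 'I_K, 'cV[R]_(pd k) -> 'cV[R]_(pd k))
  (h : forall k : 'I_K, 'cV[R]_(d k) -> R) (domh : forall k : 'I_K, 'cV[R]_(d k) -> Prop)
  (X : forall k : 'I_K, 'cV[R]_(d k) -> Prop)
  (Lc rho alpha : R) :
  0 < rho -> 0 < alpha ->
  (forall k, convex_fun_on (domg k) (g k) /\ continuous_on (domg k) (g k)) ->
  (forall k, convex_fun_on (domh k) (h k) /\ continuous_on (domh k) (h k)) ->
  (forall k u, domh k u -> X k u) ->
  (forall k, strictly_convex_on (interior (domg k)) (g k)) ->
  (forall k z, interior (domg k) z -> is_gradient_at (domg k) (g k) (gradg k z) z) ->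
  (forall k, vcontinuous_on (interior (domg k)) (gradg k)) ->
  (forall k u, X k u -> interior (domg k) (A k *m u)) ->
  0 < Lc ->
  (forall k u u', X k u -> X k u' ->
     normv ((A k)^T *m gradg k (A k *m u) - (A k)^T *m gradg k (A k *m u'))
       <= Lc * normv (u - u')) ->
  exists2 sigma : R, 0 < sigma &
    forall (x : nat -> bvec R d) (y : nat -> 'cV[R]_m),
      (forall (r : nat) (k : 'I_K),
         admm_block_min E A q g domg h domh rho X (x r.+1) (x r) (y r) k) ->
      (forall r : nat, y r.+1 = y r + alpha *: (q - Emul E (x r.+1))) ->
      forall r : nat, (1 <= r)%N ->
      forall p : bvec R d, is_prox h domh (pg_arg E A q rho gradg (x r) (y r)) p ->
        bnorm (bsub (x r) p) <= sigma * bnorm (bsub (x r.+1) (x r)).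
Proof.
move=> rhop _ _ Hh HX _ Hgrad _ Hint Lcp Hlip.
have hconv : forall k, convex_fun_on (domh k) (h k) by move=> k; case: (Hh k).
pose SE := \sum_j msum (E j) * (d j)%:R.
have SE0 : 0 <= SE by apply: sumr_ge0 => j _; rewrite mulr_ge0 // msum_ge0.
pose c (k : 'I_K) := (d k)%:R + (d k)%:R * ((d k)%:R + (d k)%:R * Lc + rho * msum (E k)^T * SE).
have c0 : forall k, 0 <= c k.
  move=> k; rewrite addr_ge0 // mulr_ge0 // !addr_ge0 // ?mulr_ge0 // ?msum_ge0 // ltW //.
exists (1 + \sum_k c k).
  by rewrite ltr_pwDl // sumr_ge0.
move=> x y Hb _ r r1 p Hp.
set Dl := bnorm (bsub (x r.+1) (x r)).
have Dl0 : 0 <= Dl by apply: sqrtr_ge0.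
have Xo : forall k, X k (x r k).
  move=> k; case: r r1 {Dl Dl0 Hp} => // r' _.
  case: (Hb r' k) => Xk _ _; exact: Xk.
have domx : forall r0 k, domh k (x r0.+1 k).
  move=> r0 k; case: (Hb r0 k) => _ ALd _.
  by have := (ALd k).1; rewrite /admm_mix dfwith_in.
have nd : forall j, normv (x r.+1 j - x r j) <= Dl.
  by move=> j; apply: (@block_le_bnorm R K d (bsub (x r.+1) (x r)) j).
have n1d : forall j, n1 (x r.+1 j - x r j) <= (d j)%:R * Dl.
  move=> j; apply: (le_trans (n1_le_normv _)); rewrite ler_wpM2l //.
have blk : forall k, normv (x r k - p k) <= c k * Dl.
  move=> k.
  set xs := x r.+1 k; set xo := x r k.
  have Dp : domh k (p k) := Hp.1 k.
  have Dxs : domh k xs := domx r k.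
  have V1 := admm_vi R K m d pd E A q g domg gradg h domh X rho rhop hconv HX Hint Hgrad
     (x r.+1) (x r) (y r) k (p k) (Hb r k) Dp.
  have V2 := prox_vi hconv Hp Dxs.
  set v := pg_arg E A q rho gradg (x r) (y r) in V2.
  set M := Emul E (admm_mix (x r.+1) (x r) k (x r.+1 k)) in V1.
  rewrite -/xs in V1.
  set astar := (_ + rho *: _) in V1.
  set Dv := p k - xs in V1.
  set cc := astar + v k - xs.
  have key : dotv Dv Dv <= dotv cc Dv.
    have E1 : xs - p k = - Dv by rewrite /Dv opprB.
    have E2 : cc - Dv = astar - (p k - v k).
      by rewrite /cc /Dv; apply/matrixP => i j; rewrite !mxE; ring.
    rewrite E1 dotvNr in V2.
    have : dotv cc Dv - dotv Dv Dv = dotv astar Dv - dotv (p k - v k) Dv.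
      by rewrite -dotvBl E2 [LHS]dotvBl.
    move: V1 V2; set a1 := dotv cc Dv; set a2 := dotv Dv Dv; set a3 := dotv astar Dv.
    set a4 := dotv (p k - v k) Dv. move=> V1 V2 HH. lra.
  have nD : normv Dv <= n1 cc.
    apply: sq_le; [exact: normv_ge0 | exact: n1_ge0 |].
    rewrite -expr2 normv_sqr; apply: (le_trans key); exact: dotv_le_n1.
  set Lip := (A k)^T *m gradg k (A k *m xs) - (A k)^T *m gradg k (A k *m xo).
  set W := (E k)^T *m (M - Emul E (x r)).
  have ccE : cc = - (xs - xo) + Lip + rho *: W.
    have WE : W = (E k)^T *m (M - q) - (E k)^T *m (Emul E (x r) - q).
      by rewrite /W -mulmxBr opprB addrA subrK.
    rewrite WE /cc /astar /v /pg_arg /Lip -/xo.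
    set G1 := (A k)^T *m _; set G2 := (A k)^T *m _; set Y := (E k)^T *m _.
    set P1 := (E k)^T *m (M - q); set P2 := (E k)^T *m _.
    by apply/matrixP => i j; rewrite !mxE; ring.
  have nLip : n1 Lip <= (d k)%:R * (Lc * Dl).
    apply: (le_trans (n1_le_normv _)); rewrite ler_wpM2l //.
    apply: (le_trans (Hlip k xs xo (HX _ _ Dxs) (Xo k))).
    by apply: ler_wpM2l; [exact: ltW | exact: nd].
  have nW : n1 W <= msum (E k)^T * (SE * Dl).
    apply: (le_trans (n1_mul _ _)); rewrite ler_wpM2l ?msum_ge0 //.
    rewrite EmulB; apply: (le_trans (n1_sum _)).
    rewrite /SE mulr_suml; apply: ler_sum => j _.
    apply: (le_trans (n1_mul _ _)); rewrite -mulrA ler_wpM2l ?msum_ge0 //.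
    case: (eqVneq k j) => [kj|kj].
      subst j; rewrite /M /admm_mix dfwith_in; exact: n1d.
    rewrite /admm_mix dfwith_out //; case: ifP => _; first exact: n1d.
    by rewrite subrr n10 mulr_ge0.
  have ncc : n1 cc <= (d k)%:R * Dl + (d k)%:R * (Lc * Dl) + rho * (msum (E k)^T * (SE * Dl)).
    rewrite ccE; apply: (le_trans (n1D _ _)); apply: lerD; last first.
      rewrite n1Z ger0_norm; last exact: ltW.
      by apply: ler_wpM2l; [exact: ltW | exact: nW].
    apply: (le_trans (n1D _ _)); apply: lerD => //.
    by rewrite n1N; apply: n1d.
  have nDv : n1 Dv <= (d k)%:R * n1 cc.
    by apply: (le_trans (n1_le_normv _)); apply: ler_wpM2l.
  apply: (le_trans (normv_le_n1 _)).
  have -> : xo - p k = - (xs - xo) - Dv by rewrite /Dv; apply/matrixP => i j; rewrite !mxE; ring.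
  apply: (le_trans (n1D _ _)); rewrite n1N.
  have := n1d k; rewrite -/xs -/xo => H1.
  have H2 : n1 Dv <= (d k)%:R * ((d k)%:R * Dl + (d k)%:R * (Lc * Dl) + rho * (msum (E k)^T * (SE * Dl))).
    by apply: (le_trans nDv); apply: ler_wpM2l.
  have -> : c k * Dl = (d k)%:R * Dl + (d k)%:R * ((d k)%:R * Dl + (d k)%:R * (Lc * Dl) + rho * (msum (E k)^T * (SE * Dl))).
    by rewrite /c; ring.
  by rewrite n1N; apply: lerD.
apply: (le_trans (bnorm_le_sum _ _ _ _)).
apply: (@le_trans _ _ (\sum_k c k * Dl)); first by apply: ler_sum => k _; apply: blk.
rewrite -mulr_suml ler_wpM2r // lerDr //.
Qed.
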